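(* Let $S$ be a random variable (the stimulus) taking values in a finite set $\mathcal{S}$ with $P(s)>0$ for all $s\in\mathcal{S}$, and let $\mathbf{R}=(R_1,\ldots,R_N)$ be a random vector (the neural response) taking values in a finite product set, with joint distribution $P(s,\mathbf{r})$. Let $\mathbf{R}^{NI}$ denote the surrogate response whose conditional distribution given $S=s$ is $P^{NI}(\mathbf{r}|s)=\prod_{n=1}^N P(r_n|s)$ (with $S$ keeping its marginal distribution). Then: (i) there exist such $S$ and $\mathbf{R}$ for which there is no stimulus-independent stochastic code mapping $\mathbf{R}$ into $\mathbf{R}^{NI}$, i.e. no transition probabilities $Q(\mathbf{r}'|\mathbf{r})\ge 0$ with $\sum_{\mathbf{r}'}Q(\mathbf{r}'|\mathbf{r})=1$ for all $\mathbf{r}$ such that $P^{NI}(\mathbf{r}'|s)=\sum_{\mathbf{r}}P(\mathbf{r}|s)\,Q(\mathbf{r}'|\mathbf{r})$ for all $s$ and $\mathbf{r}'$; (ii) if $\mathbf{R}$ is noise correlated, i.e. $P(\mathbf{r}|s)\neq P^{NI}(\mathbf{r}|s)$ for some $s$ and $\mathbf{r}$, then there is no deterministic stimulus-independent function $f$ (reduced code) such that $P(f(\mathbf{R})=\mathbf{r}'\,|\,S=s)=P^{NI}(\mathbf{r}'|s)$ for all $s$ and $\mathbf{r}'$.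
   Context: A stochastic code is a code obtained from another code through stimulus-independent transition probabilities $Q(\mathbf{r}'|\mathbf{r})$ as described; a reduced code is the special case of a deterministic stimulus-independent function. The responses $R_n$ are noise independent if $P(\mathbf{r}|s)=P^{NI}(\mathbf{r}|s)$ for all $\mathbf{r},s$, and noise correlated otherwise. *)

(* Defs.v *)
From HB Require Import structures.
From mathcomp Require Import all_boot all_order all_algebra.
From mathcomp Require Import reals.
Set Implicit Arguments. Unset Strict Implicit. Unset Printing Implicit Defensive.
Import Order.TTheory GRing.Theory Num.Theory.
Local Open Scope ring_scope.

Notation Resp A := ({dffun forall n, A n}) (only parsing).

Section Defs.
Variables (R : realType) (S : finType) (N : nat) (A : 'I_N -> finType).
Implicit Type P : {ffun S * Resp A -> R}.

Definition is_joint P := (forall x, 0 <= P x) /\ \sum_x P x = 1.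

Definition pS P (s : S) : R := \sum_(r : Resp A) P (s, r).

Definition cond P (s : S) (r : Resp A) : R := P (s, r) / pS P s.

Definition marg P (s : S) (n : 'I_N) (a : A n) : R :=
  \sum_(r : Resp A | r n == a) cond P s r.

Definition condNI P (s : S) (r : Resp A) : R :=
  \prod_(n : 'I_N) @marg P s n (r n).

Definition noise_correlated P := exists s r, cond P s r <> condNI P s r.

(* stimulus-independent stochastic code: transition probabilities Q(r'|r) = Q r r' *)
Definition stochastic_code (Q : Resp A -> Resp A -> R) :=
  (forall r r', 0 <= Q r r') /\ (forall r, \sum_(r' : Resp A) Q r r' = 1).

Definition maps_to_NI P (Q : Resp A -> Resp A -> R) :=
  forall s r', condNI P s r' = \sum_(r : Resp A) cond P s r * Q r r'.

Definition reduced_maps_to_NI P (f : Resp A -> Resp A) :=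
  forall s r', \sum_(r : Resp A | f r == r') cond P s r = condNI P s r'.

End Defs.
Arguments marg {R S N A} P s n a.

(* Main.v *)
Require Import Defs.
From HB Require Import structures.
From mathcomp Require Import all_boot all_order all_algebra.
From mathcomp Require Import reals exp.
From mathcomp Require Import lra.
Import Order.TTheory GRing.Theory Num.Theory.
Local Open Scope ring_scope.

Lemma sum_prod_dffun (R : comNzRingType) (I : finType) (T_ : I -> finType)
  (G : forall i, T_ i -> R) :
  \sum_(y : {dffun forall i, T_ i}) \prod_i G i (y i) = \prod_i \sum_(b : T_ i) G i b.
Proof.
transitivity (\prod_(i : I) \sum_(j in tagged_with T_ i) untag 0 (G i) j).
  2: by apply: eq_bigr => i _; rewrite (big_tag G i).
rewrite bigA_distr_big_dep.
have := @big_fprod R 0 1 *%R +%R I T_ (fun i => [ffun b => G i b] : {ffun T_ i -> R}).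
have E1 : forall g : {ffun I -> {i : I & T_ i}}, 
   \prod_i untag 0 ([ffun b => G i b] : {ffun T_ i -> R}) (g i) = \prod_i untag 0 (G i) (g i).
  move=> g; apply: eq_bigr => i _; rewrite /untag; case: eqP => // e; by rewrite ffunE.
under [X in _ = X -> _]eq_bigr do rewrite E1.
move=> <-.
rewrite (reindex (@fprod_of_dffun I T_)); last exact/onW_bij/fprod_of_dffun_bij.
by apply: eq_bigr => y _; apply: eq_bigr => i _; rewrite fprodE ffunE.
Qed.

Lemma marg_prod (R : comNzRingType) (I : finType) (T_ : I -> finType)
  (F : forall i, T_ i -> R) (n : I) (a : T_ n) :
  (forall i, i != n -> \sum_(b : T_ i) F i b = 1) ->
  \sum_(y : {dffun forall i, T_ i} | y n == a) \prod_i F i (y i) = F n a.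
Proof.
move=> hF.
pose G i (b : T_ i) := F i b * ((i != n) || (Tagged T_ b == Tagged T_ a))%:R.
transitivity (\sum_(y : {dffun forall i, T_ i}) \prod_i G i (y i)).
  rewrite big_mkcond /=; apply: eq_bigr => y _.
  rewrite /G big_split /= (bigD1 n) //= [X in _ = _ * X](bigD1 n) //= eqxx /= eq_Tagged /=.
  rewrite [X in _ = _ * (_ * X)]big1 => [|i ->]; last by [].
  by case: (y n == a); rewrite ?mulr1 ?mulr0.
rewrite sum_prod_dffun (bigD1 n) //= [X in _ * X]big1 => [|i ni]; last first.
  by rewrite -(hF i ni); apply: eq_bigr => b _; rewrite /G ni /= ?mulr1.
rewrite mulr1 (bigD1 a) //= big1 ?addr0 => [|b ba]; last first.
  by rewrite /G eqxx /= eq_Tagged /= (negPf ba) mulr0.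
by rewrite /G eqxx /= eq_Tagged /= eqxx mulr1.
Qed.
Section L.
Variable R : realType.

Lemma ln_lt_sub1 (z : R) : 0 < z -> z != 1 -> ln z < z - 1.
Proof.
move=> z0 z1.
have h : ln z != 0 by rewrite ln_eq0.
have := expR_gt1Dx h; rewrite lnK ?posrE // => H.
lra.
Qed.

Lemma gibbs_pt (x y : R) : 0 <= x -> 0 <= y -> (0 < x -> 0 < y) ->
  x * ln y <= x * ln x + (y - x) /\ (x != y -> x * ln y < x * ln x + (y - x)).
Proof.
move=> x0 y0 xy.
have [->|xpos] := eqVneq x 0.
  rewrite !mul0r; split => [|ny]; first lra.
  have : 0 < y by rewrite lt_neqAle ny y0.
  lra.
have xp : 0 < x by rewrite lt_neqAle eq_sym xpos.
have yp := xy xp.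
have E : x * ln y = x * ln x + x * ln (y / x).
  by rewrite ln_div ?posrE // mulrBr addrC subrK.
have F : y - x = x * (y / x - 1) by rewrite mulrBr mulr1 mulrCA divff ?mulr1.
rewrite E F; split.
  rewrite lerD2l ler_pM2l //.
  have [->|ne] := eqVneq (y / x) 1; first by rewrite ln1 subrr.
  by apply/ltW/ln_lt_sub1 => //; rewrite divr_gt0.
move=> ne; rewrite ltrD2l ltr_pM2l //; apply: ln_lt_sub1; first by rewrite divr_gt0.
apply: contra ne => /eqP h; apply/eqP.
by move: h => /(congr1 (fun t => t * x)); rewrite divfK ?mul1r // => ->.
Qed.

Lemma ln_prod (I : eqType) (s : seq I) (F : I -> R) :
  (forall i, 0 < F i) -> ln (\prod_(i <- s) F i) = \sum_(i <- s) ln (F i).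
Proof.
move=> Fp; elim: s => [|i s IH]; first by rewrite !big_nil ln1.
rewrite !big_cons lnM ?IH // posrE // prodr_gt0 //.
Qed.

Lemma push_sum (T U : finType) (p : T -> R) (q : U -> R) (f : T -> U) (g : U -> R) :
  (forall y, \sum_(r | f r == y) p r = q y) ->
  \sum_r p r * g (f r) = \sum_y q y * g y.
Proof.
move=> Hf; rewrite (partition_big f predT) //=.
apply: eq_bigr => y _; rewrite -Hf big_distrl /=.
by apply: eq_big => r // /eqP ->.
Qed.

Lemma key (T : finType) (p q : T -> R) (f : T -> T) :
  (forall r, 0 <= p r) -> \sum_r p r = 1 ->
  (forall y, \sum_(r | f r == y) p r = q y) ->
  \sum_y q y * ln (q y) <= \sum_r p r * ln (q r) ->
  (forall r, 0 < p r -> 0 < q r) -> forall r, p r = q r.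
Proof.
move=> p0 p1 Hf HBC pq r0.
have q0 : forall y, 0 <= q y by move=> y; rewrite -Hf sumr_ge0.
have pfq : forall r, p r <= q (f r).
  move=> r; rewrite -Hf (bigD1 r) //= lerDl sumr_ge0 //.
have sq : \sum_y q y = 1.
  by rewrite -p1; have := @push_sum _ _ p q f (fun _ => 1) Hf; under eq_bigr do rewrite mulr1;
     under [X in _ = X -> _]eq_bigr do rewrite mulr1.
have AB : \sum_r p r * ln (p r) <= \sum_y q y * ln (q y).
  rewrite -(@push_sum _ _ p q f (fun y => ln (q y)) Hf); apply: ler_sum => r _.
  have [->|pn] := eqVneq (p r) 0; first by rewrite !mul0r.
  have pp : 0 < p r by rewrite lt_neqAle eq_sym pn p0.
  rewrite ler_wpM2l // ler_ln ?posrE //; exact: lt_le_trans pp (pfq r).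
pose d r := p r * ln (p r) + (q r - p r) - p r * ln (q r).
have d0 : forall r, 0 <= d r.
  by move=> r; have [H _] := @gibbs_pt (p r) (q r) (p0 r) (q0 r) (pq r); rewrite /d subr_ge0.
have sd : \sum_r d r = 0.
  apply/eqP; rewrite eq_le sumr_ge0 // andbT.
  rewrite /d sumrB big_split /= sumrB sq p1 subrr addr0 subr_le0.
  exact: le_trans AB HBC.
have := @psumr_eq0P _ _ predT d (fun r _ => d0 r) sd r0 isT.
have [//|ne] := eqVneq (p r0) (q r0).
have [_ H] := @gibbs_pt (p r0) (q r0) (p0 r0) (q0 r0) (pq r0).
have := H ne; rewrite /d => H1 H2; move: H1; rewrite -subr_gt0 H2 ltxx.
by [].
Qed.

Lemma cross (N : nat) (A : 'I_N -> finType) (w : {dffun forall n, A n} -> R)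
  (m : forall n, A n -> R) :
  (forall y, w y != 0 -> forall n, 0 < m n (y n)) ->
  (forall n a, \sum_(y : {dffun forall n, A n} | y n == a) w y = m n a) ->
  \sum_(y : {dffun forall n, A n}) w y * ln (\prod_n m n (y n)) = \sum_n \sum_(a : A n) m n a * ln (m n a).
Proof.
move=> wp Hm.
transitivity (\sum_y \sum_n w y * ln (m n (y n))).
  apply: eq_bigr => y _.
  have [->|wn] := eqVneq (w y) 0; first by rewrite mul0r big1 // => n _; rewrite mul0r.
  by rewrite ln_prod ?big_distrr // => n; apply: wp.
rewrite exchange_big; apply: eq_bigr => n _.
rewrite -[LHS]/(\sum_(y : {dffun forall n, A n}) w y * ln (m n (y n))).
exact: (@push_sum _ (A n) w (m n) (fun y => y n) (fun a => ln (m n a)) (Hm n)).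
Qed.
End L.

Section Ex.
Variable R : realType.
Definition Ab : 'I_2 -> finType := fun _ => bool.
Definition r00 : {dffun forall n, Ab n} := [ffun _ => false].
Definition r11 : {dffun forall n, Ab n} := [ffun _ => true].
Definition Pex : {ffun bool * {dffun forall n, Ab n} -> R} :=
  [ffun x => if x.1 then (if x.2 == r00 then 1/2 else 0)
             else (if (x.2 == r00) || (x.2 == r11) then 1/4 else 0)].

Lemma r11_neq : r11 != r00.
Proof. by apply/eqP => /ffunP /(_ ord0); rewrite !ffunE. Qed.

Lemma sum1 (T : finType) (x0 : T) (c : R) :
  \sum_(x : T) (if x == x0 then c else 0) = c.
Proof. by rewrite (bigD1 x0) //= eqxx big1 ?addr0 // => x /negPf ->. Qed.

Lemma sum2 (T : finType) (x0 x1 : T) (c : R) : x1 != x0 ->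
  \sum_(x : T) (if (x == x0) || (x == x1) then c else 0) = c + c.
Proof.
move=> ne; rewrite (bigD1 x0) //= eqxx (bigD1 x1) //= eqxx orbT addrA.
by rewrite big1 ?addr0 // => x /andP [/negPf -> /negPf ->].
Qed.

Lemma pS_true : pS Pex true = 1/2.
Proof. by rewrite /pS; under eq_bigr do rewrite ffunE /=; rewrite sum1. Qed.
Lemma pS_false : pS Pex false = 1/2.
Proof.
rewrite /pS; under eq_bigr do rewrite ffunE /=; rewrite sum2 ?r11_neq //; lra.
Qed.

Lemma cond_true r : cond Pex true r = if r == r00 then 1 else 0.
Proof. rewrite /cond pS_true ffunE /=; case: ifP => _; lra. Qed.
Lemma cond_false r : cond Pex false r = if (r == r00) || (r == r11) then 1/2 else 0.
Proof. rewrite /cond pS_false ffunE /=; case: ifP => _; lra. Qed.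

Lemma marg_true n : marg Pex true n false = 1.
Proof.
rewrite /marg; under eq_bigr do rewrite cond_true.
rewrite big_mkcond /= (bigD1 r00) //= ffunE !eqxx big1 ?addr0 // => r /negPf ->.
by case: ifP.
Qed.

Lemma marg_false n : marg Pex false n false = 1/2.
Proof.
rewrite /marg; under eq_bigr do rewrite cond_false.
rewrite big_mkcond /= (bigD1 r00) //= ffunE !eqxx big1 ?addr0 // => r /negPf ->.
case: ifP => // + ; case: ifP => //= /eqP -> ; by rewrite ffunE.
Qed.

Lemma condNI_true : condNI Pex true r00 = 1.
Proof. by rewrite /condNI big1 // => n _; rewrite ffunE marg_true. Qed.
Lemma condNI_false : condNI Pex false r00 = 1/4.
Proof.
rewrite /condNI (eq_bigr (fun _ => 1/2)) => [|n _]; last by rewrite ffunE marg_false.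
rewrite prodr_const card_ord; lra.
Qed.

Lemma part1 : exists (S : finType) (N : nat) (A : 'I_N -> finType)
          (P : {ffun S * Resp A -> R}),
      is_joint P /\ (forall s, 0 < pS P s) /\
      ~ (exists Q : Resp A -> Resp A -> R, stochastic_code Q /\ maps_to_NI P Q).
Proof.
exists bool, 2, Ab, Pex; split; [split|split].
- move=> [[] r]; rewrite ffunE /=; case: ifP => _; lra.
- have -> : \sum_x Pex x = \sum_(a : bool) \sum_(b : {dffun forall n, Ab n}) Pex (a, b).
    by rewrite pair_bigA; apply: eq_bigr => -[].
  rewrite big_bool /=.
  rewrite -/(pS Pex true) -/(pS Pex false) pS_true pS_false; lra.
- by case; [rewrite pS_true | rewrite pS_false]; lra.
move=> [Q [[Q0 Q1] HQ]].
have h1 := HQ true r00; have h2 := HQ false r00.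
rewrite condNI_true (bigD1 r00) //= cond_true eqxx big1 ?addr0 in h1; last first.
  by move=> r /negPf; rewrite cond_true => ->; rewrite mul0r.
rewrite condNI_false (bigD1 r00) //= cond_false eqxx /= in h2.
have : 0 <= \sum_(i | i != r00) cond Pex false i * Q i r00.
  by apply: sumr_ge0 => r _; rewrite mulr_ge0 // cond_false; case: ifP => _; lra.
lra.
Qed.
End Ex.

Lemma part2 (R : realType) : forall (S : finType) (N : nat) (A : 'I_N -> finType)
          (P : {ffun S * Resp A -> R}),
      is_joint P -> (forall s, 0 < pS P s) -> noise_correlated P ->
      ~ (exists f : Resp A -> Resp A, reduced_maps_to_NI P f).
Proof.
move=> S N A P [P0 P1] pSp [s [r0 ne]] [f Hf].
apply: ne.
have ps := pSp s.
have p0 : forall r, 0 <= cond P s r by move=> r; rewrite /cond divr_ge0 // ltW.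
have p1 : \sum_r cond P s r = 1.
  rewrite /cond -big_distrl /=.
  have -> : \sum_r P (s, r) = pS P s by [].
  by rewrite mulfV // gt_eqF.
have m0 : forall n a, 0 <= marg P s n a by move=> n a; rewrite /marg sumr_ge0.
have pm : forall r n, cond P s r <= marg P s n (r n).
  by move=> r n; rewrite /marg (bigD1 r) //= lerDl sumr_ge0.
have msum : forall n, \sum_a marg P s n a = 1.
  move=> n; rewrite -p1.
  have H := @push_sum R _ (A n) (cond P s) (marg P s n) (fun y => y n) (fun _ => 1) (fun a => erefl).
  transitivity (\sum_a marg P s n a * 1); first by apply: eq_bigr => a _; rewrite mulr1.
  by rewrite -H; apply: eq_bigr => r _; rewrite mulr1.
have pq : forall r, 0 < cond P s r -> 0 < condNI P s r.
  by move=> r pr; rewrite /condNI prodr_gt0 // => n _; apply: lt_le_trans pr (pm r n).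
apply: (@key R _ (cond P s) (condNI P s) f p0 p1 (Hf s) _ pq r0).
pose D := \sum_n \sum_(a : A n) marg P s n a * ln (marg P s n a).
have E1 : \sum_y condNI P s y * ln (condNI P s y) = D.
  apply: cross => [y hy n|n a].
    rewrite lt_neqAle m0 andbT; apply: contra hy => /eqP h.
    by rewrite /condNI (bigD1 n) //= -h mul0r.
  exact: (@marg_prod R _ A (marg P s) n a (fun i _ => msum i)).
have E2 : \sum_y cond P s y * ln (condNI P s y) = D.
  apply: cross => [y hy n|n a //].
  apply: lt_le_trans (pm y n).
  by rewrite lt_neqAle eq_sym hy p0.
by rewrite E1 E2.
Qed.

Theorem theorem1 (R : realType) :
  (exists (S : finType) (N : nat) (A : 'I_N -> finType)
          (P : {ffun S * Resp A -> R}),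
      is_joint P /\ (forall s, 0 < pS P s) /\
      ~ (exists Q : Resp A -> Resp A -> R, stochastic_code Q /\ maps_to_NI P Q))
  /\
  (forall (S : finType) (N : nat) (A : 'I_N -> finType)
          (P : {ffun S * Resp A -> R}),
      is_joint P -> (forall s, 0 < pS P s) -> noise_correlated P ->
      ~ (exists f : Resp A -> Resp A, reduced_maps_to_NI P f)).
Proof. split; [exact: part1 | exact: part2]. Qed.
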